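(* Let $E$ be a Banach space, $\mathcal{E}$ the $\sigma$-algebra on $E$ generated by the (open) balls, and $F$ a linear subspace of $E^*$ such that $x\mapsto\langle x,\xi\rangle$ is $\mathcal{E}$-measurable for every $\xi\in F$. Let $\{a_n\}_{n\in\mathbf{N}}$ be a positive sequence with $a_n\to\infty$. Let $\Phi_n,\Phi:E\times F\to\mathbf{R}$ ($n\in\mathbf{N}$) be such that: 1. For all $\xi\in F$, $\Phi_n(\cdot,\xi)$ is $\mathcal{E}$-measurable. 2. For all $\xi\in F$, $\Phi(\cdot,\xi)$ is $\mathcal{E}$-measurable and continuous, and $\Phi(x,0)=0$ for all $x\in E$. 3. For all $\xi\in F$ and all compact $K\subset E$, $b_n(K,\xi):=\sup_{x\in K}|a_n^{-1}\Phi_n(x,a_n\xi)-\Phi(x,\xi)|\to0$ as $n\to\infty$. For each $n$, let $Y_n$ be an $E$-valued $\mathcal{E}$-measurable random vector defined on a probability space $(\Omega_n,\mathcal{A}_n,\mathbf{P}_n)$ (with expectation $\mathbf{E}_n$), and consider: 4. For all $n\in\mathbf{N}$ and $\xi\in F$, $\mathbf{E}_n\exp[\langle Y_n,\xi\rangle-\Phi_n(Y_n,\xi)]=1$. 5. $\{\mathcal{L}_{\mathbf{P}_n}(Y_n)\}_{n\in\mathbf{N}}$ is exponentially tight. Then if 1–4 hold, for every compact $K\subset E$, $$\limsup_n a_n^{-1}\log\mathbf{P}_n\{Y_n\in K\}\le-\inf_{x\in K}\Phi^*(x,x),$$ and if 1–5 hold, for every $A\in\mathcal{E}$, $$\limsup_n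 a_n^{-1}\log\mathbf{P}_n\{Y_n\in A\}\le-\inf_{x\in \bar A}\Phi^*(x,x).$$
   Context: For $x,y\in E$, $\Phi^*(x,y)=\sup_{\xi\in F}[\langle y,\xi\rangle-\Phi(x,\xi)]$. Exponential tightness of $\{\mathcal{L}_{\mathbf{P}_n}(Y_n)\}$ means: for every $b>0$ there is a compact $K\subset E$ with $\limsup_n a_n^{-1}\log\mathbf{P}_n\{Y_n\notin K\}\le -b$. $\bar A$ denotes the closure of $A$. *)

(* Defs.v *)
From HB Require Import structures.
From mathcomp Require Import all_boot all_order all_algebra.
From mathcomp Require Import all_classical all_reals all_analysis.
Set Implicit Arguments. Unset Strict Implicit. Unset Printing Implicit Defensive.
Import Order.TTheory GRing.Theory Num.Theory.
Import numFieldNormedType.Exports.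
Local Open Scope classical_set_scope.
Local Open Scope ring_scope.

Definition ball_sigma (R : realType) (E : normedModType R) : set (set E) :=
  <<s [set B | exists (x : E) (r : R), B = ball x r] >>.

Definition Emeasurable_fun (R : realType) (E : normedModType R) (f : E -> R) :=
  forall B : set R, measurable B -> @ball_sigma R E (f @^-1` B).

Definition Emeasurable_rv (R : realType) (E : normedModType R)
  (d : measure_display) (Om : measurableType d) (Y : Om -> E) :=
  forall B : set E, @ball_sigma R E B -> measurable (Y @^-1` B).

Definition dual_elt (R : realType) (E : normedModType R) (xi : E -> R) :=
  [/\ (forall x y, xi (x + y) = xi x + xi y),
      (forall (k : R) x, xi (k *: x) = k * xi x) & continuous xi].

Definition dual_subspace (R : realType) (E : normedModType R) (F : set (E -> R)) :=
  [/\ (forall xi, F xi -> dual_elt xi),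
      F (fun _ => 0),
      (forall xi zeta, F xi -> F zeta -> F (fun x => xi x + zeta x)) &
      (forall (k : R) xi, F xi -> F (fun x => k * xi x))].

Definition elog (R : realType) (x : \bar R) : \bar R :=
  match x with
  | r%:E => if r <= 0 then -oo%E else (ln r)%:E
  | +oo%E => +oo%E
  | -oo%E => -oo%E
  end.

Definition Phistar (R : realType) (E : normedModType R) (F : set (E -> R))
  (Phi : E -> (E -> R) -> R) (x y : E) : \bar R :=
  ereal_sup [set ((xi y - Phi x xi)%:E) | xi in F].

Definition lograte (R : realType) (E : normedModType R)
  (dO : nat -> measure_display) (Om : forall n, measurableType (dO n))
  (P : forall n, probability (Om n) R) (Y : forall n, Om n -> E)
  (a : nat -> R) (S : set E) (n : nat) : \bar R :=
  (((a n)^-1)%:E * elog (P n (Y n @^-1` S)))%E.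

Definition exp_tight (R : realType) (E : normedModType R)
  (dO : nat -> measure_display) (Om : forall n, measurableType (dO n))
  (P : forall n, probability (Om n) R) (Y : forall n, Om n -> E) (a : nat -> R) :=
  forall b : R, 0 < b -> exists K : set E, compact K /\
    (limn_esup (lograte P Y a (~` K)) <= (- b%:E))%E.

(* Main.v *)
Require Import Defs.
From HB Require Import structures.
From mathcomp Require Import all_boot all_order all_algebra.
From mathcomp Require Import all_classical all_reals all_analysis.
From mathcomp Require Import lra finmap measurable_realfun.
Import Order.TTheory GRing.Theory Num.Theory.
Import numFieldNormedType.Exports.
Local Open Scope classical_set_scope.
Local Open Scope ring_scope.
Set Implicit Arguments. Unset Strict Implicit.

Lemma esup_le_ev (R : realType) (u : nat -> \bar R) (M : \bar R) :
  (\forall n \near \oo, (u n <= M)%E) -> (limn_esup u <= M)%E.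
Proof.
move=> uM; rewrite /limn_esup limf_esupE; apply: ge_ereal_inf.
exists (ereal_sup (u @` [set n | (u n <= M)%E])).
  by exists [set n | (u n <= M)%E].
by apply: ge_ereal_sup => _ [n + <-].
Qed.

Lemma esup_lt_ev (R : realType) (u : nat -> \bar R) (M : \bar R) :
  (limn_esup u < M)%E -> \forall n \near \oo, (u n < M)%E.
Proof.
rewrite /limn_esup limf_esupE => /ereal_inf_lt [_ [V FV <-]] supM.
apply: filterS FV => n Vn; apply: le_lt_trans supM; apply: ereal_sup_ubound.
by exists n.
Qed.

Lemma le_neg_inf (R : realType) (L s : \bar R) :
  (forall l : R, (l%:E < s)%E -> (L <= (- l)%:E)%E) -> (L <= - s)%E.
Proof.
case: s => [r| |] H.
- apply/lee_addgt0Pr => e e0.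
  have := H (r - e); rewrite lte_fin ltrBlDr ltrDl e0 => /(_ isT).
  by rewrite opprB -EFinN -EFinD addrC.
- case: L H => [x| |] H.
  + have := H (`|x| + 1) (ltry _); rewrite lee_fin => h.
    have h1 : - x <= `|x| by rewrite -normrN; exact: ler_norm.
    exfalso; lra.
  + by have := H 0 (ltry _).
  + by rewrite leNye.
- by rewrite /= leey.
Qed.
Definition UB (R : realType) (E : normedModType R)
  (dO : nat -> measure_display) (Om : forall n, measurableType (dO n))
  (P : forall n, probability (Om n) R) (Y : forall n, Om n -> E)
  (a : nat -> R) (S : set E) (c : R) :=
  forall e : R, 0 < e -> \forall n \near \oo,
    (P n (Y n @^-1` S) <= (expR (a n * (c + e)))%:E)%E.

Lemma UB_lim (R : realType) (E : normedModType R)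
  (dO : nat -> measure_display) (Om : forall n, measurableType (dO n))
  (P : forall n, probability (Om n) R) (Y : forall n, Om n -> E)
  (a : nat -> R) (S : set E) (c : R) :
  (forall n, 0 < a n) -> UB P Y a S c ->
  (limn_esup (lograte P Y a S) <= c%:E)%E.
Proof.
move=> a0 H; apply/lee_addgt0Pr => e e0; apply: esup_le_ev.
apply: filterS (H e e0) => n.
rewrite /lograte.
have p0 : (0 <= P n (Y n @^-1` S))%E := measure_ge0 _ _.
case: (P n (Y n @^-1` S)) p0 => [r| |] //= r0.
- rewrite lee_fin => rle; case: ifPn => [_|].
    by rewrite mulrNy gtr0_sg ?invr_gt0// mul1e leNye.
  rewrite -ltNge => rpos; rewrite -EFinM -EFinD lee_fin.
  rewrite ler_pdivrMl//.
  rewrite -(expRK (a n * (c + e))) ler_ln ?posrE ?expR_gt0//.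
Qed.

Lemma UB_of_lim (R : realType) (E : normedModType R)
  (dO : nat -> measure_display) (Om : forall n, measurableType (dO n))
  (P : forall n, probability (Om n) R) (Y : forall n, Om n -> E)
  (a : nat -> R) (S : set E) (c : R) :
  (forall n, 0 < a n) -> (limn_esup (lograte P Y a S) <= c%:E)%E ->
  UB P Y a S c.
Proof.
move=> a0 H e e0.
have : (limn_esup (lograte P Y a S) < (c + e)%:E)%E.
  by apply: le_lt_trans H _; rewrite lte_fin ltrDl.
move/esup_lt_ev; apply: filterS => n; rewrite /lograte.
have p0 : (0 <= P n (Y n @^-1` S))%E := measure_ge0 _ _.
case: (P n (Y n @^-1` S)) p0 => [r| |] //= r0.
- case: ifPn => [rle0 _|].
    have -> : r = 0 by apply/eqP; rewrite eq_le rle0 -lee_fin.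
    by rewrite lee_fin; apply/ltW/expR_gt0.
  rewrite -ltNge => rpos; rewrite -EFinM lte_fin => h; rewrite lee_fin.
  rewrite -[r]lnK ?posrE// ler_expR; apply: ltW.
  by rewrite -ltr_pdivrMl.
- by rewrite mulry gtr0_sg ?invr_gt0// mul1e.
Qed.

Lemma UB_mono (R : realType) (E : normedModType R)
  (dO : nat -> measure_display) (Om : forall n, measurableType (dO n))
  (P : forall n, probability (Om n) R) (Y : forall n, Om n -> E)
  (a : nat -> R) (S T : set E) (c : R) :
  (forall n, measurable (Y n @^-1` S)) -> (forall n, measurable (Y n @^-1` T)) ->
  S `<=` T -> UB P Y a T c -> UB P Y a S c.
Proof.
move=> mS mT ST H e e0; apply: filterS (H e e0) => n; apply: le_trans.
by apply: le_measure; [apply/mem_set; exact: mS | apply/mem_set; exact: mT | move=> w /= /ST].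
Qed.

Lemma UB_le (R : realType) (E : normedModType R)
  (dO : nat -> measure_display) (Om : forall n, measurableType (dO n))
  (P : forall n, probability (Om n) R) (Y : forall n, Om n -> E)
  (a : nat -> R) (S : set E) (c c' : R) :
  (forall n, 0 < a n) -> c <= c' -> UB P Y a S c -> UB P Y a S c'.
Proof.
move=> a0 cc H e e0; apply: filterS (H e e0) => n h; apply: (le_trans h).
by rewrite lee_fin ler_expR ler_pM2l// lerD2r.
Qed.

Lemma UB_set0 (R : realType) (E : normedModType R)
  (dO : nat -> measure_display) (Om : forall n, measurableType (dO n))
  (P : forall n, probability (Om n) R) (Y : forall n, Om n -> E)
  (a : nat -> R) (c : R) : UB P Y a set0 c.
Proof.
move=> e e0; apply: nearW => n.
by rewrite preimage_set0 measure0 lee_fin; apply/ltW/expR_gt0.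
Qed.

Lemma UB_union (R : realType) (E : normedModType R)
  (dO : nat -> measure_display) (Om : forall n, measurableType (dO n))
  (P : forall n, probability (Om n) R) (Y : forall n, Om n -> E)
  (a : nat -> R) (S T : set E) (c : R) :
  (forall n, 0 < a n) -> a @ \oo --> +oo ->
  (forall n, measurable (Y n @^-1` S)) -> (forall n, measurable (Y n @^-1` T)) ->
  UB P Y a S c -> UB P Y a T c -> UB P Y a (S `|` T) c.
Proof.
move=> a0 ainf mS mT HS HT e e0.
have e2 : 0 < e / 2 by rewrite divr_gt0.
have HA := (proj1 (cvgryPge _) ainf) (ln 2 / (e / 2)).
near=> n.
have h1 : (P n (Y n @^-1` S) <= (expR (a n * (c + e / 2)))%:E)%E.
  by near: n; apply: HS.
have h2 : (P n (Y n @^-1` T) <= (expR (a n * (c + e / 2)))%:E)%E.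
  by near: n; apply: HT.
have h3 : ln 2 / (e / 2) <= a n by near: n; apply: HA.
rewrite preimage_setU; apply: le_trans (measureU2 _ (mS n) (mT n)) _.
apply: le_trans (leeD h1 h2) _; rewrite -EFinD lee_fin.
have -> : a n * (c + e) = a n * (c + e / 2) + a n * (e / 2).
  by rewrite -mulrDr -addrA -splitr.
rewrite expRD -mulr2n -(mulr_natr (expR _) 2) ler_pM2l ?expR_gt0//.
rewrite -[X in X <= _](@lnK _ 2) ?posrE// ler_expR -ler_pdivrMr//.
Unshelve. all: end_near. Qed.

Lemma UB_seq (R : realType) (E : normedModType R)
  (dO : nat -> measure_display) (Om : forall n, measurableType (dO n))
  (P : forall n, probability (Om n) R) (Y : forall n, Om n -> E)
  (a : nat -> R) (C : E -> set E) (c : R) (s : seq E) :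
  (forall n, 0 < a n) -> a @ \oo --> +oo ->
  (forall x n, measurable (Y n @^-1` C x)) ->
  (forall x, x \in s -> UB P Y a (C x) c) ->
  (forall n, measurable (Y n @^-1` [set y | exists2 x, x \in s & C x y])) /\
  UB P Y a [set y | exists2 x, x \in s & C x y] c.
Proof.
move=> a0 ainf mC; elim: s => [|x s IH] Hs.
  have -> : [set y | exists2 x, x \in [::] & C x y] = set0.
    by apply/seteqP; split => y // [].
  split; [move=> n; rewrite preimage_set0; exact: measurable0 | exact: UB_set0].
have -> : [set y | exists2 z, z \in x :: s & C z y] =
    C x `|` [set y | exists2 z, z \in s & C z y].
  apply/seteqP; split => y.
    move=> [z]; rewrite in_cons => /orP [/eqP -> | zs] Cy; first by left.
    by right; exists z.
  move=> [Cy | [z zs Cy]]; first by exists x; rewrite ?mem_head.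
  by exists z; rewrite // in_cons zs orbT.
have [IH1 IH2] := IH (fun z zs => Hs z (introT orP (or_intror zs) : z \in x :: s)).
split.
  by move=> n; rewrite preimage_setU; apply: measurableU.
apply: UB_union => //; exact: Hs (mem_head _ _).
Qed.

Lemma compact_bs (R : realType) (E : normedModType R) (K : set E) :
  compact K -> ball_sigma K.
Proof.
move=> cK.
pose G := [set B : set E | exists (x : E) (r : R), B = ball x r].
have cov : forall m : nat, exists D : {fset E}, (forall x, x \in D -> K x) /\
    K `<=` \bigcup_(x in [set` D]) ball x (m.+1%:R^-1).
  move=> m; move: (cK); rewrite compact_cover => /(_ E K (fun x => ball x (m.+1%:R^-1))).
  case.
  - by move=> x _; exact: ball_open.
  - by move=> x Kx; exists x => //; exact: ballxx.
  - by move=> D sD cD; exists D; split => // x /sD; rewrite in_setE.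
have [Df HD] := choice cov.
have -> : K = \bigcap_m \bigcup_(x in [set` Df m]) ball x (m.+1%:R^-1).
  apply/seteqP; split => [y Ky m _ | y Hy].
    exact: (proj2 (HD m)).
  apply: (compact_closed (@norm_hausdorff _ _) cK) => B /nbhs_ballP [eps /= eps0 hB].
  have [N _ hN] := near_infty_natSinv_lt (PosNum eps0).
  have /= lt := hN N (leqnn N).
  have [x /= xD xy] := Hy N I.
  exists x; split.
    exact: (proj1 (HD N)) x xD.
  by apply: hB; apply: (le_ball (ltW lt)); apply: ball_sym.
change (@measurable _ (g_sigma_algebraType G)
  (\bigcap_m \bigcup_(x in [set` Df m]) ball x (m.+1%:R^-1))).
apply: bigcapT_measurable => m; apply: fin_bigcup_measurable; first exact: finite_fset.
by move=> x _; apply: sub_sigma_algebra; exists x, (m.+1%:R^-1).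
Qed.

Lemma mcomp (R : realType) (E : normedModType R)
  (d : measure_display) (Om : measurableType d) (Y : Om -> E) (g : E -> R) :
  Emeasurable_fun g -> Emeasurable_rv Y ->
  measurable_fun setT (fun w => g (Y w)).
Proof. by move=> mg mY _ B mB; rewrite setTI; exact: (mY (g @^-1` B) (mg B mB)). Qed.

Lemma cheb (R : realType) (E : normedModType R)
  (F : set (E -> R)) (a : nat -> R)
  (Phin : nat -> E -> (E -> R) -> R) (Phi : E -> (E -> R) -> R)
  (dO : nat -> measure_display) (Om : forall n, measurableType (dO n))
  (P : forall n, probability (Om n) R) (Y : forall n, Om n -> E)
  (xi : E -> R) (C : set E) (l : R) :
  dual_subspace F ->
  (forall xi, F xi -> Emeasurable_fun xi) ->
  (forall n, 0 < a n) ->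
  (forall n xi, F xi -> Emeasurable_fun (fun x => Phin n x xi)) ->
  (forall xi K, F xi -> compact K ->
     (fun n => ereal_sup ([set 0%E] `|`
        [set (`| (a n)^-1 * Phin n x (fun y => a n * xi y) - Phi x xi |)%:E
        | x in K])) @ \oo --> 0%E) ->
  (forall n, Emeasurable_rv (Y n)) ->
  (forall n xi, F xi ->
     (\int[P n]_w (expR (xi (Y n w) - Phin n (Y n w) xi))%:E)%E = 1%E) ->
  F xi -> compact C -> (forall y, C y -> l <= xi y - Phi y xi) ->
  UB P Y a C (- l).
Proof.
move=> [_ _ _ Fsc] mF a0 mPhin H3 mY H4 Fxi cC Cl e e0.
have /fine_cvgP [bfin bcvg] := H3 xi C Fxi cC.
have hb := cvgr_lt _ bcvg _ e0.
near=> n.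
have bn : forall y, C y ->
    `| (a n)^-1 * Phin n y (fun z => a n * xi z) - Phi y xi | <= e.
  move=> y Cy; rewrite -lee_fin.
  pose S := ([set 0%E] `|`
        [set (`| (a n)^-1 * Phin n x (fun y => a n * xi y) - Phi x xi |)%:E
        | x in C]).
  have fin : ereal_sup S \is a fin_num by rewrite /S; near: n.
  have h : ((`| (a n)^-1 * Phin n y (fun z => a n * xi z) - Phi y xi |)%:E
     <= ereal_sup S)%E by apply: ereal_sup_ubound; right; exists y.
  apply: le_trans h _.
  rewrite -(fineK fin) lee_fin; apply: ltW; rewrite /S; near: n; exact: hb.
set A := a n.
have A0 : 0 < A := a0 n.
set xi' := fun z => A * xi z.
have Fxi' : F xi' by apply: Fsc.
have pt : forall y, C y -> A * (l - e) <= A * xi y - Phin n y xi'.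
  move=> y Cy; have := bn y Cy.
  have := Cl y Cy.
  set t := A^-1 * Phin n y xi'.
  have -> : Phin n y xi' = A * t by rewrite /t mulrA divff ?gt_eqF// mul1r.
  rewrite -mulrBr ler_pM2l// => h1 h2.
  have := ler_norm (t - Phi y xi); lra.
set D := Y n @^-1` C.
have mD : measurable D by apply: mY; apply: compact_bs.
set f := fun w => (expR (xi' (Y n w) - Phin n (Y n w) xi'))%:E.
have mg : measurable_fun setT (fun w => expR (xi' (Y n w) - Phin n (Y n w) xi')).
  apply: (measurableT_comp (@measurable_realfun.measurable_expR _)).
  apply: measurable_realfun.measurable_funB.
    exact: (mcomp (mF _ Fxi') (mY n)).
  exact: (mcomp (mPhin n _ Fxi') (mY n)).
have mf : measurable_fun setT f by exact: ((measurable_realfun.measurable_EFinP _ _).2 mg).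
have f0 : forall w, (0 <= f w)%E by move=> w; rewrite lee_fin; apply/ltW/expR_gt0.
set c := expR (A * (l - e)).
have c0 : 0 < c := expR_gt0 _.
have key : (c%:E * P n D <= 1)%E.
  rewrite -(H4 n xi' Fxi') -/f -integral_cst//.
  apply: (@le_trans _ _ (\int[P n]_(w in D) f w)%E).
    apply: ge0_le_integral => //.
    - by move=> w _; rewrite lee_fin ltW.
    - exact: measurable_funTS.
    - by move=> w Dw; rewrite /= lee_fin ler_expR; apply: pt.
  by apply: ge0_subset_integral => //.
have p0 : (0 <= P n D)%E := measure_ge0 _ _.
move: key p0; case: (P n D) => [r| |] //=.
- rewrite -EFinM !lee_fin => cr r0.
  have -> : A * (- l + e) = - (A * (l - e)) by rewrite -mulrN opprB addrC.
  by rewrite expRN -/c -[c^-1]mulr1 ler_pdivlMl.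
- by rewrite mulry gtr0_sg// mul1e.
Unshelve. all: end_near. Qed.

Lemma part1 (R : realType) (E : normedModType R)
  (F : set (E -> R)) (a : nat -> R)
  (Phin : nat -> E -> (E -> R) -> R) (Phi : E -> (E -> R) -> R)
  (dO : nat -> measure_display) (Om : forall n, measurableType (dO n))
  (P : forall n, probability (Om n) R) (Y : forall n, Om n -> E)
  (K : set E) (l : R) :
  dual_subspace F ->
  (forall xi, F xi -> Emeasurable_fun xi) ->
  (forall n, 0 < a n) ->
  a @ \oo --> +oo ->
  (forall n xi, F xi -> Emeasurable_fun (fun x => Phin n x xi)) ->
  (forall xi, F xi -> Emeasurable_fun (fun x => Phi x xi) /\
                      continuous (fun x => Phi x xi)) ->
  (forall xi K, F xi -> compact K ->
     (fun n => ereal_sup ([set 0%E] `|`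
        [set (`| (a n)^-1 * Phin n x (fun y => a n * xi y) - Phi x xi |)%:E
        | x in K])) @ \oo --> 0%E) ->
  (forall n, Emeasurable_rv (Y n)) ->
  (forall n xi, F xi ->
     (\int[P n]_w (expR (xi (Y n w) - Phin n (Y n w) xi))%:E)%E = 1%E) ->
  compact K -> (forall x, K x -> (l%:E < Phistar F Phi x x)%E) ->
  UB P Y a K (- l).
Proof.
move=> dF mF a0 ainf mPhin H2 H3 mY H4 cK Kl.
have [Fdual _ _ _] := dF.
have loc : forall x, exists p : (E -> R) * R, K x ->
    [/\ F p.1, 0 < p.2 & forall y, ball x p.2 y -> l <= p.1 y - Phi y p.1].
  move=> x; case: (pselect (K x)) => Kx; last first.
    by exists ((fun _ => 0), 1).
  have [_ [xi Fxi <-]] := ereal_sup_gt (Kl x Kx).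
  rewrite lte_fin => lx.
  have cg : {for x, continuous (fun y => xi y - Phi y xi)}.
    apply: (@continuousB _ _ _ xi (fun y => Phi y xi)).
      by have [_ _ ] := Fdual xi Fxi; apply.
    exact: (proj2 (H2 xi Fxi)).
  have [r /= r0 hr] := (nbhs_ballP x _).1 (cvgr_gt _ cg _ lx).
  exists (xi, r) => _; split => // y /hr /= h; exact: ltW.
have [pp Hpp] := choice loc.
pose C x := K `&` closed_ball x ((pp x).2 / 2).
have cC : forall x, compact (C x).
  move=> x; apply: (subclosed_compact _ cK); last by move=> y [].
  apply: closedI; first exact: (compact_closed (@norm_hausdorff _ _) cK).
  exact: closed_ball_closed.
have mC : forall x n, measurable (Y n @^-1` C x).
  by move=> x n; apply: mY; apply: compact_bs.
have : exists D : {fset E}, (forall x, x \in D -> K x) /\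
    K `<=` \bigcup_(x in [set` D]) ball x ((pp x).2 / 2).
  move: (cK); rewrite compact_cover => /(_ E K (fun x => ball x ((pp x).2 / 2))).
  case.
  - by move=> x _; exact: ball_open.
  - move=> x Kx; exists x => //; apply: ballxx.
    by have [_ r0 _] := Hpp x Kx; rewrite divr_gt0.
  - by move=> D sD cD; exists D; split => // x /sD; rewrite in_setE.
move=> [D [DK KD]].
have HUB : forall x, x \in D -> UB P Y a (C x) (- l).
  move=> x xD; have Kx := DK x xD; have [Fx r0 hb] := Hpp x Kx.
  apply: (cheb dF mF a0 mPhin H3 mY H4 Fx (cC x)).
  move=> y [_ cy]; apply: hb; apply: (closed_ball_subset _ _ cy).
    by rewrite divr_gt0.
  have : 0 < (pp x).2 := r0.
  lra.
have [mCov UBc] := UB_seq a0 ainf mC HUB.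
apply: (UB_mono _ mCov _ UBc).
  by move=> n; apply: mY; exact: compact_bs.
move=> y Ky; have [x xD bxy] := KD y Ky.
exists x => //; split => //; exact: subset_closed_ball.
Qed.

Unset Implicit Arguments.

Theorem theorem2p1 (R : realType) (E : completeNormedModType R)
  (F : set (E -> R)) (a : nat -> R)
  (Phin : nat -> E -> (E -> R) -> R) (Phi : E -> (E -> R) -> R)
  (dO : nat -> measure_display) (Om : forall n, measurableType (dO n))
  (P : forall n, probability (Om n) R) (Y : forall n, Om n -> E) :
  dual_subspace F ->
  (forall xi, F xi -> Emeasurable_fun xi) ->
  (forall n, 0 < a n) ->
  a @ \oo --> +oo ->
  (* 1 *)
  (forall n xi, F xi -> Emeasurable_fun (fun x => Phin n x xi)) ->
  (* 2 *)
  (forall xi, F xi -> Emeasurable_fun (fun x => Phi x xi) /\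
                      continuous (fun x => Phi x xi)) ->
  (forall x, Phi x (fun _ => 0) = 0) ->
  (* 3 : b_n(K,xi) -> 0 (sup over K, with the convention sup over empty = 0) *)
  (forall xi K, F xi -> compact K ->
     (fun n => ereal_sup ([set 0%E] `|`
        [set (`| (a n)^-1 * Phin n x (fun y => a n * xi y) - Phi x xi |)%:E
        | x in K])) @ \oo --> 0%E) ->
  (* Y_n measurable *)
  (forall n, Emeasurable_rv (Y n)) ->
  (* 4 *)
  (forall n xi, F xi ->
     (\int[P n]_w (expR (xi (Y n w) - Phin n (Y n w) xi))%:E)%E = 1%E) ->
  (forall K : set E, compact K ->
     (limn_esup (lograte P Y a K) <= - ereal_inf [set Phistar F Phi x x | x in K])%E)
  /\
  (exp_tight P Y a ->
   forall A : set E, @ball_sigma R E A ->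
     (limn_esup (lograte P Y a A)
        <= - ereal_inf [set Phistar F Phi x x | x in closure A])%E).
Proof.
move=> dF mF a0 ainf mPhin H2 H20 H3 mY H4; split.
  move=> K cK; apply: le_neg_inf => l hl; apply: UB_lim => //.
  apply: (part1 dF mF a0 ainf mPhin H2 H3 mY H4 cK) => x Kx.
  by apply: lt_le_trans hl _; apply: ereal_inf_lbound; exists x.
move=> ET A mA; apply: le_neg_inf => l hl.
pose b := `|l| + 1.
have b0 : 0 < b by rewrite /b ltr_pwDr// normr_ge0.
have [Kb [cKb hKb]] := ET b b0.
rewrite -EFinN in hKb.
have UBc := UB_of_lim a0 hKb.
pose C := closure A `&` Kb.
have cC : compact C.
  apply: (subclosed_compact _ cKb); last by move=> y [].
  apply: closedI; first exact: closed_closure.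
  exact: (compact_closed (@norm_hausdorff _ _) cKb).
have UB1 : UB P Y a C (- l).
  apply: (part1 dF mF a0 ainf mPhin H2 H3 mY H4 cC) => x [Ax _].
  by apply: lt_le_trans hl _; apply: ereal_inf_lbound; exists x.
have bl : - b <= - l.
  rewrite lerN2 /b; have := ler_norm l; lra.
have UB2 := UB_le a0 bl UBc.
have mC : forall n, measurable (Y n @^-1` C) by move=> n; apply: mY; exact: compact_bs.
have mKc : forall n, measurable (Y n @^-1` ~` Kb).
  by move=> n; apply: mY; apply: sigma_algebraC; exact: compact_bs.
have U := UB_union a0 ainf mC mKc UB1 UB2.
apply: UB_lim => //; apply: (UB_mono _ _ _ U).
- by move=> n; apply: mY.
- by move=> n; rewrite preimage_setU; apply: measurableU.
- move=> y Ay; case: (pselect (Kb y)) => Kby; last by right.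
  by left; split => //; apply: subset_closure.
Qed.
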